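(* Let $X$ be a finite connected poset, $F$ a field and $\varphi$ a Jordan automorphism of $I(X,F)$ such that $\varphi(e_x)=e_{\lambda(x)}$ for all $x\in X$, for some bijection $\lambda:X\to X$. Then $\lambda$ is either an order automorphism or an order anti-automorphism of $X$.
   Context: $I(X,F)$ is the incidence algebra of the locally finite poset $X$ over $F$ (functions $f:X\times X\to F$ vanishing unless $x\le y$, with product $(fg)(x,y)=\sum_{x\le z\le y}f(x,z)g(z,y)$). For $x\le y$, $e_{xy}$ is the function equal to $1$ at $(x,y)$ and $0$ elsewhere, and $e_x:=e_{xx}$. A poset is connected if any two elements are joined by a finite sequence of elements in which consecutive elements are comparable. A Jordan automorphism of an associative algebra $A$ is a bijective linear map $\varphi:A\to A$ with $\varphi(a^2)=\varphi(a)^2$ and $\varphi(aba)=\varphi(a)\varphi(b)\varphi(a)$ for all $a,b\in A$. An order automorphism (resp. anti-automorphism) of $X$ is a bijection $\lambda$ such that $\lambda$ and $\lambda^{-1}$ are order-preserving (resp. order-reversing). *)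

(* Defs.v *)
From HB Require Import structures.
From mathcomp Require Import all_boot all_order all_algebra.
Set Implicit Arguments. Unset Strict Implicit. Unset Printing Implicit Defensive.
Import Order.TTheory GRing.Theory.
Local Open Scope ring_scope.
Local Open Scope order_scope.

Section Incidence.
Variables (d : Order.disp_t) (X : finPOrderType d) (F : fieldType).

Definition incidence_pred : pred {ffun X * X -> F} :=
  fun f => [forall p : X * X, ~~ (p.1 <= p.2) ==> (f p == 0)].

Definition incidence := {f : {ffun X * X -> F} | incidence_pred f}.

Definition inc_val (f : incidence) : {ffun X * X -> F} := sval f.

Lemma inc_vanish (f : incidence) (p : X * X) :
  ~~ (p.1 <= p.2) -> inc_val f p = 0.
Proof.
case: f => g /= /forallP H Hp; exact/eqP/(implyP (H p) Hp).
Qed.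

Definition inc_add_fun (f g : incidence) : {ffun X * X -> F} :=
  [ffun p => inc_val f p + inc_val g p].
Lemma inc_add_subproof f g : incidence_pred (inc_add_fun f g).
Proof.
apply/forallP=> p; apply/implyP=> Hp.
by rewrite ffunE !inc_vanish // addr0.
Qed.
Definition inc_add (f g : incidence) : incidence :=
  exist _ (inc_add_fun f g) (inc_add_subproof f g).

Definition inc_scale_fun (a : F) (f : incidence) : {ffun X * X -> F} :=
  [ffun p => a * inc_val f p].
Lemma inc_scale_subproof a f : incidence_pred (inc_scale_fun a f).
Proof.
apply/forallP=> p; apply/implyP=> Hp.
by rewrite ffunE !inc_vanish // mulr0.
Qed.
Definition inc_scale (a : F) (f : incidence) : incidence :=
  exist _ (inc_scale_fun a f) (inc_scale_subproof a f).

Definition inc_mul_fun (f g : incidence) : {ffun X * X -> F} :=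
  [ffun p => \sum_(z : X | (p.1 <= z) && (z <= p.2))
               inc_val f (p.1, z) * inc_val g (z, p.2)].
Lemma inc_mul_subproof f g : incidence_pred (inc_mul_fun f g).
Proof.
apply/forallP=> p; apply/implyP=> Hp; rewrite ffunE.
apply/eqP; apply: big_pred0 => z; apply/negbTE/negP => /andP[h1 h2].
by move/negP: Hp; apply; exact: le_trans h1 h2.
Qed.
Definition inc_mul (f g : incidence) : incidence :=
  exist _ (inc_mul_fun f g) (inc_mul_subproof f g).

Definition inc_e_fun (x : X) : {ffun X * X -> F} :=
  [ffun p => ((p.1 == x) && (p.2 == x))%:R].
Lemma inc_e_subproof x : incidence_pred (inc_e_fun x).
Proof.
apply/forallP=> p; apply/implyP=> Hp; rewrite ffunE.
case: (p.1 =P x) => [h1|]//=; case: (p.2 =P x) => [h2|]//=.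
by move/negP: Hp; rewrite h1 h2 lexx.
Qed.
Definition inc_e (x : X) : incidence :=
  exist _ (inc_e_fun x) (inc_e_subproof x).

Definition jordan_automorphism (phi : incidence -> incidence) : Prop :=
  [/\ bijective phi,
      (forall (a : F) (f g : incidence),
          phi (inc_add (inc_scale a f) g) = inc_add (inc_scale a (phi f)) (phi g)),
      (forall f : incidence, phi (inc_mul f f) = inc_mul (phi f) (phi f)) &
      (forall f g : incidence,
          phi (inc_mul (inc_mul f g) f) = inc_mul (inc_mul (phi f) (phi g)) (phi f))].

End Incidence.

Section PosetDefs.
Variables (d : Order.disp_t) (X : porderType d).

Definition poset_connected (Y : finPOrderType d) : Prop :=
  forall x y : Y, connect (fun a b : Y => (a >=< b)%O) x y.

Definition order_automorphism (lam : X -> X) : Prop :=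
  [/\ bijective lam,
      (forall x y, x <= y -> lam x <= lam y) &
      (forall x y, lam x <= lam y -> x <= y)].

Definition order_anti_automorphism (lam : X -> X) : Prop :=
  [/\ bijective lam,
      (forall x y, x <= y -> lam y <= lam x) &
      (forall x y, lam y <= lam x -> x <= y)].

End PosetDefs.

(* Main.v *)
From HB Require Import structures.
From mathcomp Require Import all_boot all_order all_algebra.
Require Import Defs.
Set Implicit Arguments. Unset Strict Implicit. Unset Printing Implicit Defensive.
Import Order.TTheory GRing.Theory.

Section Basic.
Local Open Scope ring_scope.
Local Open Scope order_scope.
Variables (d : Order.disp_t) (X : finPOrderType d) (F : fieldType).
Notation I := (incidence X F).
Notation V := (@inc_val d X F).

Lemma inc_ext (f g : I) : (forall p, V f p = V g p) -> f = g.
Proof. move=> H; apply: val_inj; apply/ffunP => p; exact: H. Qed.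

Lemma addE f g p : V (inc_add f g) p = V f p + V g p.
Proof. by rewrite /= ffunE. Qed.

Lemma mulE f g x y : V (inc_mul f g) (x,y) = \sum_z V f (x,z) * V g (z,y).
Proof.
rewrite /= ffunE /= big_mkcond; apply: eq_bigr => z _; case: ifP => // /negbT.
rewrite negb_and => /orP[] H.
  by rewrite (@inc_vanish _ _ _ f (x,z)) ?mul0r.
by rewrite (@inc_vanish _ _ _ g (z,y)) ?mulr0.
Qed.

Lemma inc0_subproof : @incidence_pred d X F [ffun=> 0].
Proof. by apply/forallP => p; rewrite ffunE eqxx implybT. Qed.
Definition inc0 : I := exist _ [ffun=> 0] inc0_subproof.
Lemma inc0E p : V inc0 p = 0. Proof. by rewrite /= ffunE. Qed.

Definition Efun (x y : X) : {ffun X * X -> F} :=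
  [ffun p => if [&& p.1 == x, p.2 == y & x <= y] then 1 else 0].
Lemma E_subproof x y : @incidence_pred d X F (Efun x y).
Proof.
apply/forallP => p; apply/implyP => Hp; rewrite ffunE.
case: (p.1 =P x) => [h1|] //=; case: (p.2 =P y) => [h2|] //=.
by rewrite -h1 -h2 (negbTE Hp).
Qed.
Definition E x y : I := exist _ (Efun x y) (E_subproof x y).
Lemma EE x y u v : x <= y -> V (E x y) (u,v) = if (u == x) && (v == y) then 1 else 0.
Proof. by move=> xy; rewrite /= ffunE /= xy andbT. Qed.
Lemma eE x u v : V (inc_e F x) (u,v) = if (u == x) && (v == x) then 1 else 0.
Proof. by rewrite /= ffunE /=; case: (_ && _). Qed.

Definition single (f : I) (s t : X) :=
  forall u v, V f (u,v) != 0 -> (u == s) && (v == t).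

Lemma singleE f s t u v : single f s t ->
  V f (u,v) = if (u == s) && (v == t) then V f (s,t) else 0.
Proof.
move=> Hf; case: ifP => [/andP[/eqP-> /eqP->] // | H].
by apply/eqP/negP => /negP/Hf; rewrite H.
Qed.

Lemma single_E x y : x <= y -> single (E x y) x y.
Proof. by move=> xy u v; rewrite EE //; case: (_ && _); rewrite ?eqxx. Qed.
Lemma single_e x : single (inc_e F x) x x.
Proof. by move=> u v; rewrite eE //; case: (_ && _); rewrite ?eqxx. Qed.

Lemma prodE f g s1 t1 s2 t2 u v : single f s1 t1 -> single g s2 t2 ->
  V (inc_mul f g) (u,v) =
  if [&& u == s1, t1 == s2 & v == t2] then V f (s1,t1) * V g (s2,t2) else 0.
Proof.
move=> Hf Hg; rewrite mulE (bigD1 t1) //= big1 ?addr0; last first.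
  move=> z zt; have [->|/Hf/andP[_ /eqP zE]] := eqVneq (V f (u,z)) 0.
    by rewrite mul0r.
  by rewrite zE eqxx in zt.
rewrite (singleE u t1 Hf) (singleE t1 v Hg) eqxx andbT.
by case: (u == s1); case: (t1 == s2); case: (v == t2); rewrite /= ?mul0r ?mulr0.
Qed.

Definition J (f g : I) := inc_add (inc_mul f g) (inc_mul g f).

Lemma sqE f g : inc_mul (inc_add f g) (inc_add f g) =
  inc_add (inc_add (inc_mul f f) (J f g)) (inc_mul g g).
Proof.
apply: inc_ext => -[u v]; rewrite !addE !mulE -!big_split; apply: eq_bigr => z _.
rewrite !addE mulrDl !mulrDr !addrA.
exact: (esym (congr1 (fun w => w + _) (addrA _ _ _))).
Qed.

Lemma JC f g : J f g = J g f.
Proof. by apply: inc_ext => p; rewrite !addE addrC. Qed.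

Lemma Jnz f g s1 t1 s2 t2 : single f s1 t1 -> single g s2 t2 ->
  t1 = s2 -> s1 != s2 -> V f (s1,t1) != 0 -> V g (s2,t2) != 0 ->
  V (J f g) (s1,t2) != 0.
Proof.
move=> Hf Hg ts ss nf ng; rewrite addE (prodE _ _ Hf Hg) (prodE _ _ Hg Hf).
by rewrite ts !eqxx (negbTE ss) /= addr0 mulf_neq0 // -ts.
Qed.


Lemma Jdiag w f u v : V (J (inc_e F w) f) (u,v) =
  (if u == w then V f (w,v) else 0) + (if v == w then V f (u,w) else 0).
Proof.
rewrite addE !mulE (bigD1 w) //= big1 ?addr0; last first.
  by move=> z /negbTE zw; rewrite eE zw andbF mul0r.
rewrite (bigD1 w) //= big1 ?addr0; last first.
  by move=> z /negbTE zw; rewrite eE zw /= mulr0.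
rewrite !eE !eqxx !andbT.
by case: (u == w); case: (v == w); rewrite ?mul1r ?mul0r ?mulr1 ?mulr0.
Qed.

Lemma onesided w f : J (inc_e F w) f = f ->
  forall u v, V f (u,v) != 0 -> (u == w) != (v == w).
Proof.
move=> H u v nz; have E0 := congr1 (fun h => V h (u,v)) H; rewrite /= Jdiag in E0.
case: (eqVneq u w) => [uw|uw]; case: (eqVneq v w) => [vw|vw] //=.
  move: E0 nz; rewrite uw vw eqxx => E0.
  by move/(congr1 (fun z => z - V f (w,w))): E0; rewrite addrK subrr => <-; rewrite eqxx.
by move: E0 nz; rewrite (negbTE uw) (negbTE vw) addr0 => <-; rewrite eqxx.
Qed.

Lemma cmp_lt (x y : X) : x != y -> x >=< y -> (x < y) || (y < x).
Proof.
move=> nxy; rewrite /Order.comparable !le_eqVlt (negbTE nxy) eq_sym (negbTE nxy) /=.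
by [].
Qed.

Section Phi.
Variables (phi : I -> I) (lam : X -> X).
Hypotheses (Hadd : forall f g, phi (inc_add f g) = inc_add (phi f) (phi g))
  (HJ : forall f g, phi (J f g) = J (phi f) (phi g))
  (Hinj : injective phi) (Hlinj : injective lam)
  (He : forall x, phi (inc_e F x) = inc_e F (lam x)).

Lemma phi0 : phi inc0 = inc0.
Proof.
have H : inc_add inc0 inc0 = inc0 by apply: inc_ext => p; rewrite addE inc0E addr0.
apply: inc_ext => p; have := congr1 (fun h => V h p) (Hadd inc0 inc0).
rewrite H addE inc0E => /(congr1 (fun z => z - V (phi inc0) p)).
by rewrite addrK subrr.
Qed.

Lemma JeE a b : a < b -> J (inc_e F a) (E a b) = E a b /\ J (inc_e F b) (E a b) = E a b.
Proof.
move=> ab; have lab := ltW ab; have nab : (b == a) = false by rewrite gt_eqF.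
split; apply: inc_ext => -[u v]; rewrite Jdiag !EE // eqxx /=.
  by rewrite (eq_sym a b) nab andbF if_same addr0; case: (u == a).
by rewrite nab andbT /= if_same add0r; case: (v == b); case: (u == a).
Qed.

Definition dir a b := lam a < lam b.
Definition src a b := if dir a b then lam a else lam b.
Definition tgt a b := if dir a b then lam b else lam a.

Lemma F1 a b : a < b -> exists2 p, V (phi (E a b)) p != 0 &
  forall u v, V (phi (E a b)) (u,v) != 0 ->
   ((u == lam a) && (v == lam b)) || ((u == lam b) && (v == lam a)).
Proof.
move=> ab; have [Ha Hb] := JeE ab.
have nlab : lam a != lam b by rewrite (inj_eq Hlinj) lt_eqF.
have [/existsP[p Hp]|/existsPn H] := boolP [exists p, V (phi (E a b)) p != 0]; last first.
  have : phi (E a b) = phi inc0.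
    by rewrite phi0; apply: inc_ext => p; rewrite inc0E; apply/eqP; move: (H p); rewrite negbK.
  move/Hinj/(congr1 (fun h => V h (a,b))); rewrite EE ?ltW // !eqxx inc0E => /eqP.
  by rewrite oner_eq0.
exists p => //.
move=> u v nz.
have H1 : (u == lam a) != (v == lam a).
  by apply: onesided nz; rewrite -He -HJ Ha.
have H2 : (u == lam b) != (v == lam b).
  by apply: onesided nz; rewrite -He -HJ Hb.
case: (eqVneq u (lam a)) H1 H2 => [->|ua]; rewrite ?eqxx.
  by rewrite (negbTE nlab); case: (v == lam a); case: (v == lam b).
case: (eqVneq v (lam a)) => [->|va] //= _.
by rewrite (negbTE nlab); case: (u == lam b).
Qed.


Lemma phiE_single a b : a < b ->
  single (phi (E a b)) (src a b) (tgt a b) /\ V (phi (E a b)) (src a b, tgt a b) != 0.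
Proof.
move=> ab; have [p Hp Hs] := F1 ab.
have nlab : lam a != lam b by rewrite (inj_eq Hlinj) lt_eqF.
have key : single (phi (E a b)) (src a b) (tgt a b).
  move=> u v nz.
  have uv : u <= v.
    by apply: contraTT nz => /(@inc_vanish _ _ _ _ (u,v)) ->; rewrite eqxx.
  rewrite /src /tgt /dir.
  case/orP: (Hs u v nz) => /andP[/eqP eu /eqP ev]; rewrite eu ev in uv *.
    have -> : lam a < lam b by rewrite lt_neqAle nlab uv.
    by rewrite !eqxx.
  by rewrite (le_gtF uv) /= !eqxx.
split => //; case: p Hp => u v Hp.
by case/andP: (key u v Hp) => /eqP eu /eqP ev; rewrite -eu -ev.
Qed.

Lemma cmp_img a b : a < b -> (lam a < lam b) || (lam b < lam a).
Proof.
move=> ab; have [p Hp Hs] := F1 ab; case: p Hp => u v Hp.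
have nlab : lam a != lam b by rewrite (inj_eq Hlinj) lt_eqF.
have uv : u <= v.
  by apply: contraTT Hp => /(@inc_vanish _ _ _ _ (u,v)) ->; rewrite eqxx.
case/orP: (Hs u v Hp) => /andP[/eqP eu /eqP ev]; rewrite eu ev in uv.
  by rewrite lt_neqAle nlab uv.
by rewrite orbC lt_neqAle eq_sym nlab uv.
Qed.


Lemma sglE a b : a < b -> dir a b ->
  single (phi (E a b)) (lam a) (lam b) /\ V (phi (E a b)) (lam a, lam b) != 0.
Proof. by move=> ab D; have := phiE_single ab; rewrite /src /tgt D. Qed.
Lemma sglE' a b : a < b -> dir a b = false ->
  single (phi (E a b)) (lam b) (lam a) /\ V (phi (E a b)) (lam b, lam a) != 0.
Proof. by move=> ab D; have := phiE_single ab; rewrite /src /tgt D. Qed.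

Lemma lneq x y : x != y -> lam x != lam y.
Proof. by rewrite (inj_eq Hlinj). Qed.

Lemma C1 a b c : a < b -> b < c -> dir a b = dir b c.
Proof.
move=> ab bc; have ac := lt_trans ab bc.
have lab := ltW ab; have lbc := ltW bc; have lac := ltW ac.
have HJ0 : J (E a b) (E b c) = E a c.
  apply: inc_ext => -[u v]; rewrite addE (prodE _ _ (single_E lab) (single_E lbc)).
  rewrite (prodE _ _ (single_E lbc) (single_E lab)) !EE // !eqxx (gt_eqF ac) /= andbF.
  by case: (u == a); case: (v == c); rewrite /= ?mulr1 ?addr0.
have [_ nz] := phiE_single ac; move: nz; rewrite -HJ0 HJ addE.
case E1: (dir a b); case E2: (dir b c) => //.
  have [s1 _] := sglE ab E1; have [s2 _] := sglE' bc E2.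
  rewrite (prodE _ _ s1 s2) (prodE _ _ s2 s1) !(inj_eq Hlinj).
  by rewrite (lt_eqF bc) (gt_eqF ab) /= !andbF addr0 eqxx.
have [s1 _] := sglE' ab E1; have [s2 _] := sglE bc E2.
rewrite (prodE _ _ s1 s2) (prodE _ _ s2 s1) !(inj_eq Hlinj).
by rewrite (lt_eqF ab) (gt_eqF bc) /= !andbF addr0 eqxx.
Qed.

Lemma C2 a b c : a < b -> a < c -> b != c -> dir a b = dir a c.
Proof.
move=> ab ac bc; have lab := ltW ab; have lac := ltW ac.
have HJ0 : J (E a b) (E a c) = inc0.
  apply: inc_ext => -[u v]; rewrite addE (prodE _ _ (single_E lab) (single_E lac)).
  by rewrite (prodE _ _ (single_E lac) (single_E lab)) (gt_eqF ab) (gt_eqF ac) /= !andbF addr0 inc0E.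
have Z : forall p, V (J (phi (E a b)) (phi (E a c))) p = 0.
  by move=> p; rewrite -HJ HJ0 phi0 inc0E.
case E1: (dir a b); case E2: (dir a c) => //.
  have [s1 n1] := sglE ab E1; have [s2 n2] := sglE' ac E2.
  have := Jnz s2 s1 erefl (lneq (negbT (gt_eqF ac))) n2 n1.
  by rewrite JC Z eqxx.
have [s1 n1] := sglE' ab E1; have [s2 n2] := sglE ac E2.
have := Jnz s1 s2 erefl (lneq (negbT (gt_eqF ab))) n1 n2.
by rewrite Z eqxx.
Qed.

Lemma C3 a b c : b < a -> c < a -> b != c -> dir b a = dir c a.
Proof.
move=> ba ca bc; have lba := ltW ba; have lca := ltW ca.
have HJ0 : J (E b a) (E c a) = inc0.
  apply: inc_ext => -[u v]; rewrite addE (prodE _ _ (single_E lba) (single_E lca)).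
  by rewrite (prodE _ _ (single_E lca) (single_E lba)) (gt_eqF ba) (gt_eqF ca) /= !andbF addr0 inc0E.
have Z : forall p, V (J (phi (E b a)) (phi (E c a))) p = 0.
  by move=> p; rewrite -HJ HJ0 phi0 inc0E.
case E1: (dir b a); case E2: (dir c a) => //.
  have [s1 n1] := sglE ba E1; have [s2 n2] := sglE' ca E2.
  have := Jnz s1 s2 erefl (lneq (negbT (lt_eqF ba))) n1 n2.
  by rewrite Z eqxx.
have [s1 n1] := sglE' ba E1; have [s2 n2] := sglE ca E2.
have := Jnz s2 s1 erefl (lneq (negbT (lt_eqF ca))) n2 n1.
by rewrite JC Z eqxx.
Qed.


Definition dirp x y := if x < y then dir x y else dir y x.

Lemma share x y z : x != y -> x >=< y -> x != z -> x >=< z -> dirp x y = dirp x z.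
Proof.
move=> xy cxy xz cxz; rewrite /dirp.
case/orP: (cmp_lt xy cxy) => h1; case/orP: (cmp_lt xz cxz) => h2;
  rewrite ?h1 ?h2 ?(lt_gtF h1) ?(lt_gtF h2).
- by case: (eqVneq y z) => [->//|yz]; exact: C2.
- by rewrite (C1 h2 h1).
- exact: C1.
- by case: (eqVneq y z) => [->//|yz]; exact: C3.
Qed.

Lemma dirp_sym x y : x != y -> x >=< y -> dirp x y = dirp y x.
Proof.
by move=> xy cxy; rewrite /dirp; case/orP: (cmp_lt xy cxy) => h; rewrite h (lt_gtF h).
Qed.

Definition G t : pred X := fun z => [forall y, ((z >=< y) && (y != z)) ==> (dirp z y == t)].

Lemma Gimp t z w : z >=< w -> G t z -> G t w.
Proof.
move=> czw /forallP Gz; apply/forallP => y; apply/implyP => /andP[cwy yw].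
case: (eqVneq z w) => [ezw|zw]; first by move: (Gz y); rewrite ezw cwy yw.
have := Gz w; rewrite czw eq_sym zw /= => /eqP Dzw.
have e1 : w != y by rewrite eq_sym.
have e2 : w != z by rewrite eq_sym.
have c2 : w >=< z by rewrite comparable_sym.
by rewrite (share e1 cwy e2 c2) -(dirp_sym zw czw) Dzw.
Qed.

Lemma global : poset_connected X -> exists t, forall a b, a < b -> dir a b = t.
Proof.
move=> Hc.
case: (boolP [exists p : X * X, p.1 < p.2]) => [/existsP[[x0 y0] /= h0]|/existsPn H]; last first.
  by exists true => a b ab; have := H (a,b); rewrite /= ab.
exists (dir x0 y0).
have Gx0 : G (dir x0 y0) x0.
  apply/forallP => y; apply/implyP => /andP[c ny]; apply/eqP.
  have e1 : x0 != y by rewrite eq_sym.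
  have e2 : x0 != y0 by rewrite (lt_eqF h0).
  by rewrite (share e1 c e2 (lt_comparable h0)) /dirp h0.
have Hcl : closed (fun a b : X => a >=< b) (G (dir x0 y0)).
  move=> a b cab; apply/idP/idP; first exact: Gimp.
  by apply: Gimp; rewrite comparable_sym.
move=> a b ab.
have := closed_connect Hcl (Hc x0 a); rewrite /in_mem /= Gx0 => /esym /forallP /(_ b).
by rewrite (lt_comparable ab) (gt_eqF ab) /dirp ab /= => /eqP.
Qed.

End Phi.
End Basic.

Theorem lemma4p2 (d : Order.disp_t) (X : finPOrderType d) (F : fieldType)
    (phi : incidence X F -> incidence X F) (lam : X -> X) :
  poset_connected X ->
  jordan_automorphism phi ->
  bijective lam ->
  (forall x : X, phi (inc_e F x) = inc_e F (lam x)) ->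
  order_automorphism lam \/ order_anti_automorphism lam.
Proof.
move=> Hc [[psi K1 K2] Hlin Hsq _] [mu L1 L2] He.
have Hinj : injective phi := can_inj K1.
have Hlinj : injective lam := can_inj L1.
have Hadd : forall f g, phi (inc_add f g) = inc_add (phi f) (phi g).
  move=> f g.
  have H1 : forall h : incidence X F, inc_scale 1%R h = h.
    by move=> h; apply: inc_ext => p; rewrite /= ffunE GRing.mul1r.
  by have := Hlin 1%R f g; rewrite !H1.
have HJ : forall f g, phi (J f g) = J (phi f) (phi g).
  move=> f g; apply: inc_ext => p.
  have := congr1 (fun h => inc_val h p) (Hsq (inc_add f g)).
  rewrite sqE !Hadd sqE !Hsq !addE => /addIr /addrI ->.
  done.
have Hinj' : injective psi := can_inj K2.
have Hlinj' : injective mu := can_inj L2.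
have Hadd' : forall f g, psi (inc_add f g) = inc_add (psi f) (psi g).
  by move=> f g; apply: Hinj; rewrite K2 Hadd !K2.
have HJ' : forall f g, psi (J f g) = J (psi f) (psi g).
  by move=> f g; apply: Hinj; rewrite K2 HJ !K2.
have He' : forall u, psi (inc_e F u) = inc_e F (mu u).
  by move=> u; apply: Hinj; rewrite K2 He L2.
have [t Ht] := global Hadd HJ Hinj Hlinj He Hc.
have inv : forall x y, (lam x < lam y)%O -> (x < y)%O || (y < x)%O.
  by move=> x y h; have := cmp_img Hadd' HJ' Hinj' Hlinj' He' h; rewrite !L1.
case: t Ht => Ht; [left|right]; split; try by exists mu.
- move=> x y; rewrite le_eqVlt => /orP[/eqP->|xy]; first exact: lexx.
  by have := Ht _ _ xy; rewrite /dir => /ltW.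
- move=> x y; rewrite le_eqVlt => /orP[/eqP/Hlinj->|lxy]; first exact: lexx.
  case/orP: (inv _ _ lxy) => h; first exact: ltW.
  have := Ht _ _ h; rewrite /dir => h2.
  by have := lt_trans h2 lxy; rewrite ltxx.
- move=> x y; rewrite le_eqVlt => /orP[/eqP->|xy]; first exact: lexx.
  have := Ht _ _ xy; rewrite /dir => h.
  by have := cmp_img Hadd HJ Hinj Hlinj He xy; rewrite h /= => /ltW.
- move=> x y; rewrite le_eqVlt => /orP[/eqP/Hlinj->|lyx]; first exact: lexx.
  case/orP: (inv _ _ lyx) => h; last exact: ltW.
  by have := Ht _ _ h; rewrite /dir lyx.
Qed.
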